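(* Let $x_0\in\mathbb{R}\cup\{+\infty\}$, $T<x_0$, $I=[T,x_0)$, and let $\phi_1,\phi_2\in C^1(I)$ satisfy $\phi_2(x)=o(\phi_1(x))$ as $x\to x_0$, $\phi_1(x)>0$ and $\phi_2(x)\neq0$ for all $x\in I$, and $W(x):=W(\phi_1,\phi_2;x)>0$ for all $x\in I$. Let $f\in\mathcal{C}(\phi_1,\phi_2;(T,x_0))$. Then: (i) $f$ is absolutely continuous on every compact subinterval of $(T,x_0)$; (ii) the functions $f_1^*,f_2^*,F^*$ are defined a.e. on $(T,x_0)$ and, for some Lebesgue null set $N$, are monotonic on $(T,x_0)\setminus N$: $f_2^*$ is increasing; $f_1^*$ and $F^*$ have opposite types of monotonicity; and $(\operatorname{sign}\phi_2)\cdot F^*$ is increasing; (iii) for any real constants $a_1,a_2$ and any nontrivial linear combination $\tilde\phi$ of $\phi_1,\phi_2$, the function $[f(x)+a_1\phi_1(x)+a_2\phi_2(x)]/\tilde\phi(x)$ is either constant or strictly monotonic on a suitable deleted one-sided neighborhood (within $(T,x_0)$) of each of the endpoints $T$ and $x_0$; (iv) the two limits $$\lim_{x\to x_0}\frac{f(x)}{\phi_1(x)},\qquad \lim_{x\to x_0}\frac{(f(x)/\phi_2(x))'}{(\phi_1(x)/\phi_2(x))'}$$ exist in $\overline{\mathbb{R}}=\mathbb{R}\cup\{\pm\infty\}$ and are equal.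
   Context: Limits as $x\to x_0$ are taken for $x<x_0$, over points where the functions are defined. For differentiable $g,h$, $W(g,h;x):=g(x)h'(x)-g'(x)h(x)$. Generalized convexity: for a pair $(\psi_1,\psi_2)$ of continuous functions on an interval $J$, a function $f:J\to\mathbb{R}$ belongs to $\mathcal{C}(\psi_1,\psi_2;J)$ iff for all $t_1<t_2<t_3$ in $J$ $$\det\begin{pmatrix}\psi_1(t_1)&\psi_1(t_2)&\psi_1(t_3)\\ \psi_2(t_1)&\psi_2(t_2)&\psi_2(t_3)\\ f(t_1)&f(t_2)&f(t_3)\end{pmatrix}\ge0.$$ Definitions: at points $t$ where $f$ is differentiable, $f_1^*(t):=W(f,\phi_2;t)/W(t)$, $f_2^*(t):=-W(f,\phi_1;t)/W(t)$; $\Phi(x):=\phi_2(T)\phi_1(x)-\phi_1(T)\phi_2(x)$; $F^*(t):=\phi_1(T)f_1^*(t)+\phi_2(T)f_2^*(t)=W(\Phi,f;t)/W(t)$. ''Increasing'' means nondecreasing. *)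

(* Defs.v *)
From HB Require Import structures.
From mathcomp Require Import all_boot all_order all_algebra.
From mathcomp Require Import all_classical all_reals all_analysis.
Set Implicit Arguments.
Unset Strict Implicit.
Unset Printing Implicit Defensive.
Import Order.TTheory GRing.Theory Num.Theory.
Import numFieldNormedType.Exports.
Local Open Scope classical_set_scope.
Local Open Scope ring_scope.

Section Defs.
Variable R : realType.

(* The filter "x -> x0, x < x0" for x0 in R \cup {+oo} (-oo is never used,
   since x0 > T always). *)
Definition toward (x0 : \bar R) : set_system R :=
  match x0 with
  | EFin r => at_left r
  | EPInf => pinfty_nbhs R
  | ENInf => ninfty_nbhs R
  end.

Definition Ico_e (T : R) (x0 : \bar R) : set R :=
  [set x | T <= x /\ (x%:E < x0)%E].
Definition Ioo_e (a : R) (x0 : \bar R) : set R :=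
  [set x | a < x /\ (x%:E < x0)%E].

Definition C1_Ico (T : R) (x0 : \bar R) (phi dphi : R -> R) : Prop :=
  [/\ (forall x, Ioo_e T x0 x -> is_derive x (1 : R) phi (dphi x)),
      (fun h : R => (phi (T + h) - phi T) / h) @ 0^'+ --> dphi T
    & {within Ico_e T x0, continuous dphi}].

Definition Wr (g dg h dh : R -> R) (x : R) : R := g x * dh x - dg x * h x.

Definition gen_convex (psi1 psi2 : R -> R) (J : set R) (f : R -> R) : Prop :=
  forall t1 t2 t3 : R, J t1 -> J t2 -> J t3 -> t1 < t2 -> t2 < t3 ->
    0 <= \det (\matrix_(i < 3, j < 3)
                 (nth (fun _ => 0) [:: psi1; psi2; f] i) (nth 0 [:: t1; t2; t3] j)).

Definition abs_cont_on (a b : R) (f : R -> R) : Prop :=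
  forall eps : R, 0 < eps -> exists2 delta : R, 0 < delta &
    forall (n : nat) (u v : nat -> R),
      (forall k, (k < n)%N -> a <= u k /\ u k <= v k /\ v k <= b) ->
      (forall k l, (k < l)%N -> (l < n)%N -> v k <= u l) ->
      \sum_(k < n) (v k - u k) < delta ->
      \sum_(k < n) `|f (v k) - f (u k)| < eps.

(* f_1^*, f_2^*, F^* (meaningful at points where f is differentiable) *)
Definition f1star (phi1 dphi1 phi2 dphi2 f : R -> R) (t : R) : R :=
  Wr f (derive1 f) phi2 dphi2 t / Wr phi1 dphi1 phi2 dphi2 t.
Definition f2star (phi1 dphi1 phi2 dphi2 f : R -> R) (t : R) : R :=
  - (Wr f (derive1 f) phi1 dphi1 t / Wr phi1 dphi1 phi2 dphi2 t).
Definition Fstar (T : R) (phi1 dphi1 phi2 dphi2 f : R -> R) (t : R) : R :=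
  phi1 T * f1star phi1 dphi1 phi2 dphi2 f t
  + phi2 T * f2star phi1 dphi1 phi2 dphi2 f t.

Definition incr_on (D : set R) (g : R -> R) : Prop :=
  forall x y, D x -> D y -> x <= y -> g x <= g y.
Definition decr_on (D : set R) (g : R -> R) : Prop :=
  forall x y, D x -> D y -> x <= y -> g y <= g x.
Definition strincr_on (D : set R) (g : R -> R) : Prop :=
  forall x y, D x -> D y -> x < y -> g x < g y.
Definition strdecr_on (D : set R) (g : R -> R) : Prop :=
  forall x y, D x -> D y -> x < y -> g y < g x.
Definition const_on (D : set R) (g : R -> R) : Prop :=
  forall x y, D x -> D y -> g x = g y.

Definition const_or_strmono_on (D : set R) (g : R -> R) : Prop :=
  const_on D g \/ strincr_on D g \/ strdecr_on D g.

End Defs.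

(* Main.v *)
Require Import Defs.
From HB Require Import structures.
From mathcomp Require Import all_boot all_order all_algebra.
From mathcomp Require Import all_classical all_reals all_analysis.
From mathcomp Require Import ring lra.
Set Implicit Arguments.
Unset Strict Implicit.
Unset Printing Implicit Defensive.
Import Order.TTheory GRing.Theory Num.Theory.
Import numFieldNormedType.Exports.
Local Open Scope classical_set_scope.
Local Open Scope ring_scope.


Section Gen.
Variable R : realType.
Implicit Types (x y z : R).

Lemma Jright_gen (x0 : \bar R) x : (x%:E < x0)%E -> exists y, x < y /\ (y%:E < x0)%E.
Proof.
case: x0 => [r||] //= hx.
- exists ((x + r)/2); rewrite lte_fin in hx; split; rewrite ?lte_fin; lra.
- by exists (x + 1); split; [lra| exact: ltry].
Qed.

#[global] Instance toward_pf (x0 : \bar R) : ProperFilter (@toward R x0).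
Proof. case: x0 => [r||] /=; exact: _. Qed.

#[global] Instance toward_f (x0 : \bar R) : Filter (@toward R x0).
Proof. exact: (toward_pf x0). Qed.

Lemma tw_ev (x0 : \bar R) x : (x%:E < x0)%E ->
  \forall y \near toward x0, x < y /\ (y%:E < x0)%E.
Proof.
case: x0 => [r||] //= hx.
- rewrite lte_fin in hx; near=> y; split.
    by near: y; exact: nbhs_left_gt.
  by rewrite lte_fin; near: y; exact: nbhs_left_lt.
- near=> y; split; last exact: ltry.
  by near: y; apply: nbhs_pinfty_gt; exact: num_real.
Unshelve. all: by end_near. Qed.

Lemma tw_intro (x0 : \bar R) z (P : R -> Prop) : (z%:E < x0)%E ->
  (forall y, z < y -> (y%:E < x0)%E -> P y) -> \forall y \near toward x0, P y.
Proof. by move=> hz hP; apply: (filterS _ (tw_ev hz)) => y []; exact: hP. Qed.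

Lemma tw_witness (x0 : \bar R) z (P : R -> Prop) : (z%:E < x0)%E ->
  (\forall y \near toward x0, P y) -> exists y, [/\ z < y, (y%:E < x0)%E & P y].
Proof.
move=> hz hP.
have [y [[? ?] ?]] := filter_ex (filterI (tw_ev hz) hP).
by exists y.
Qed.

End Gen.


Section Quot.
Variable R : realType.
Implicit Types (x y z l d : R) (g : R -> R).

Definition qt g x (h : R) := (g (x + h) - g x) / h.

Lemma qt_eqD g x : (fun h : R => h^-1 *: ((g \o shift x) (h *: (1:R)) - g x)) = qt g x.
Proof. by apply/funext => h; rewrite /qt /= /shift /= [h%:A]mulr1 [h + x]addrC mulrC. Qed.

Lemma qt_eq1 g x : (fun h : R => h^-1 *: (g (h + x) - g x)) = qt g x.
Proof. by apply/funext => h; rewrite /qt /= [h + x]addrC mulrC. Qed.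

Lemma qt_derive g x l : qt g x @ (0:R)^' --> l -> derivable g x 1 /\ derive1 g x = l.
Proof.
move=> hq; split.
  by rewrite /derivable qt_eqD; apply/cvg_ex; exists l.
by rewrite /derive1 qt_eq1; exact: cvg_lim.
Qed.

Lemma derive_qt g x : derivable g x 1 -> qt g x @ (0:R)^' --> derive1 g x.
Proof.
move=> dg; have := dg; rewrite /derivable qt_eqD => /cvg_ex [l hl].
by have [_ ->] := qt_derive hl.
Qed.

Lemma isd_qt g x d : is_derive x 1 g d -> qt g x @ (0:R)^' --> d.
Proof.
move=> [dg dv]; have := derive_qt dg; rewrite derive1E dv; exact.
Qed.

Lemma id_dnbhs0 : (fun h : R => h) @ (0:R)^' --> (0:R).
Proof. exact: cvg_within. Qed.

Lemma qt_cont g x l : qt g x @ (0:R)^' --> l -> (fun h : R => g (x + h)) @ (0:R)^' --> g x.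
Proof.
move=> hq.
have e : \forall h \near (0:R)^', (fun h => g x + h * qt g x h) h = (fun h => g (x + h)) h.
  near=> h; rewrite /qt mulrC divfK; first by rewrite addrC subrK.
  by near: h; exact: nbhs_dnbhs_neq.
have h1 : (fun h => g x + h * qt g x h) @ (0:R)^' --> g x + 0 * l.
  apply: cvgD; [exact: cvg_cst| apply: cvgM => //; exact: id_dnbhs0].
rewrite mul0r addr0 in h1.
exact: cvg_trans (near_eq_cvg e) h1.
Unshelve. all: by end_near. Qed.

Lemma dn_right (P : R -> Prop) : (\forall h \near (0:R)^', P h) -> \forall h \near (0:R)^'+, P h.
Proof.
rewrite !near_withinE => hP; apply: filterS hP => h hh hpos; apply: hh.
by rewrite /= gt_eqF.
Qed.

Lemma dn_left (P : R -> Prop) : (\forall h \near (0:R)^', P h) -> \forall h \near (0:R)^'-, P h.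
Proof.
rewrite !near_withinE => hP; apply: filterS hP => h hh hneg; apply: hh.
by rewrite /= lt_eqF.
Qed.

Lemma n0_dn (P : R -> Prop) : (\forall h \near (0:R), P h) -> \forall h \near (0:R)^', P h.
Proof. by move=> hP; exact: cvg_within. Qed.

Lemma cvg_dn_right (k : R -> R) l : k @ (0:R)^' --> l -> k @ (0:R)^'+ --> l.
Proof. by move=> hk; apply: cvg_trans hk; move=> P; exact: dn_right. Qed.

Lemma cvg_dn_left (k : R -> R) l : k @ (0:R)^' --> l -> k @ (0:R)^'- --> l.
Proof. by move=> hk; apply: cvg_trans hk; move=> P; exact: dn_left. Qed.

Lemma Jopen (T : R) (x0 : \bar R) x : T < x -> (x%:E < x0)%E ->
  \forall h \near (0:R), T < x + h /\ ((x + h)%:E < x0)%E.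
Proof.
move=> Tx xx0; have [y [xy yx0]] := Jright_gen xx0.
have e0 : 0 < Num.min (x - T) (y - x) by rewrite lt_min !subr_gt0 Tx xy.
have hn : \forall h \near (0:R), `|h| < Num.min (x - T) (y - x).
  exact: (@nbhs0_lt R R^o _ e0).
apply: filterS hn => h; rewrite lt_min => /andP [h1 h2].
have hn : - `|h| <= h by rewrite lerNl ler_normr lexx orbT.
split; first lra.
apply: (le_lt_trans _ yx0); rewrite lee_fin.
have := ler_norm h; lra.
Qed.

End Quot.


Section Quot2.
Variable R : realType.
Implicit Types (x y z l d a b : R) (g k : R -> R).

Lemma near_eq_cvgT (F : set_system R) {FF : Filter F} (k1 k2 : R -> R) l :
  (\forall h \near F, k1 h = k2 h) -> k1 @ F --> l -> k2 @ F --> l.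
Proof.
move=> e hk; apply: cvg_trans hk; apply: near_eq_cvg.
by apply: filterS e => h ->.
Qed.

Lemma qt_mul g k x a b : qt g x @ (0:R)^' --> a -> qt k x @ (0:R)^' --> b ->
  qt (fun y => g y * k y) x @ (0:R)^' --> a * k x + g x * b.
Proof.
move=> hg hk.
have e : \forall h \near (0:R)^',
  qt g x h * k (x + h) + g x * qt k x h = qt (fun y => g y * k y) x h.
  near=> h; have hn : h != 0 by near: h; exact: nbhs_dnbhs_neq.
  rewrite /qt; field; exact: hn.
apply: near_eq_cvgT e _.
apply: cvgD; first (apply: cvgM => //; exact: qt_cont hk).
exact: cvgMr.
Unshelve. all: by end_near. Qed.

Lemma qt_div g k x a b : qt g x @ (0:R)^' --> a -> qt k x @ (0:R)^' --> b ->
  k x != 0 -> (\forall h \near (0:R)^', k (x + h) != 0) ->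
  qt (fun y => g y / k y) x @ (0:R)^' --> (a * k x - g x * b) / (k x ^+ 2).
Proof.
move=> hg hk kx0 kn0.
have e : \forall h \near (0:R)^',
  (qt g x h * k x - g x * qt k x h) * (k (x + h) * k x)^-1
  = qt (fun y => g y / k y) x h.
  near=> h; have hn : h != 0 by near: h; exact: nbhs_dnbhs_neq.
  have kh : k (x + h) != 0 by near: h; exact: kn0.
  rewrite /qt; field; rewrite hn kx0 kh //.
apply: near_eq_cvgT e _.
rewrite expr2; apply: cvgM.
  apply: cvgB; [exact: cvgMl|exact: cvgMr].
apply: cvgV; first by rewrite mulf_neq0.
apply: cvgMl; exact: qt_cont hk.
Unshelve. all: by end_near. Qed.

Lemma qt_near g1 g2 x l : (\forall h \near (0:R), g1 (x + h) = g2 (x + h)) ->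
  qt g1 x @ (0:R)^' --> l -> qt g2 x @ (0:R)^' --> l.
Proof.
move=> e; apply: near_eq_cvgT.
have e0 : g1 x = g2 x by have := nbhs_singleton e; rewrite addr0.
apply: n0_dn; apply: filterS e => h eh; by rewrite /qt eh e0.
Qed.

End Quot2.

Section Lip.
Variable R : realType.
Implicit Types (a b x y M : R) (g k : R -> R).

Definition lip a b g := exists M, 0 <= M /\
  forall x y, a <= x <= b -> a <= y <= b -> `|g y - g x| <= M * `|y - x|.

Lemma lip_bd a b g : lip a b g -> exists B, forall x, a <= x <= b -> `|g x| <= B.
Proof.
move=> [M [M0 hM]]; exists (`|g a| + M * `|b - a|) => x hx.
have ha : a <= a <= b by rewrite lexx; case/andP: hx => h1 h2; exact: le_trans h1 h2.
have := hM a x ha hx.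
have : `|x - a| <= `|b - a|.
  case/andP: hx => h1 h2; rewrite !ger0_norm ?subr_ge0 //; first lra.
  exact: le_trans h1 h2.
move=> h1 h2.
have h3 : `|g x| <= `|g a| + `|g x - g a|.
  by rewrite -{1}(subrK (g a) (g x)) addrC; apply: ler_normD.
have h4 : M * `|x - a| <= M * `|b - a| by exact: ler_wpM2l.
lra.
Qed.

Lemma lip_ext a b g k : (forall x, a <= x <= b -> g x = k x) -> lip a b g -> lip a b k.
Proof.
move=> e [M [M0 hM]]; exists M; split => // x y hx hy.
by rewrite -!e //; exact: hM.
Qed.

Lemma lip_mul a b g k : lip a b g -> lip a b k -> lip a b (fun x => g x * k x).
Proof.
move=> lg lk; have [Bg hBg] := lip_bd lg; have [Bk hBk] := lip_bd lk.
move: lg lk => [Mg [Mg0 hg]] [Mk [Mk0 hk]].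
exists (`|Bg| * Mk + `|Bk| * Mg); split.
  by apply: addr_ge0; apply: mulr_ge0.
move=> x y hx hy.
have -> : g y * k y - g x * k x = g y * (k y - k x) + k x * (g y - g x) by ring.
apply: (le_trans (ler_normD _ _)); rewrite !normrM mulrDl.
have e1 : `|g y| * `|k y - k x| <= `|Bg| * Mk * `|y - x|.
  rewrite -mulrA; apply: ler_pM => //.
    exact: le_trans (hBg y hy) (ler_norm _).
  exact: hk.
have e2 : `|k x| * `|g y - g x| <= `|Bk| * Mg * `|y - x|.
  rewrite -mulrA; apply: ler_pM => //.
    exact: le_trans (hBk x hx) (ler_norm _).
  exact: hg.
lra.
Qed.

Lemma lip_inv a b g m : 0 < m -> (forall x, a <= x <= b -> m <= g x) -> lip a b g ->
  lip a b (fun x => (g x)^-1).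
Proof.
move=> m0 hm [M [M0 hM]]; exists (M / (m * m)); split.
  by apply: divr_ge0 => //; apply: mulr_ge0; exact: ltW.
move=> x y hx hy.
have gx := lt_le_trans m0 (hm x hx); have gy := lt_le_trans m0 (hm y hy).
have -> : (g y)^-1 - (g x)^-1 = (g x - g y) / (g x * g y).
  by field; rewrite !gt_eqF.
have N : `|g x - g y| = `|g y - g x| by rewrite -normrN opprB.
rewrite normrM normfV N [`|g x * g y|]gtr0_norm ?mulr_gt0 //.
have p : 0 < g x * g y by exact: mulr_gt0.
have mm : m * m <= g x * g y.
  by apply: ler_pM => //; [exact: ltW| exact: ltW| exact: hm| exact: hm].
apply: (@le_trans _ _ (M * `|y - x| / (g x * g y))).
  by apply: ler_wpM2r; [rewrite invr_ge0; exact: ltW| exact: hM].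
rewrite [M / _ * _]mulrAC; apply: ler_wpM2l; first exact: mulr_ge0.
by rewrite lef_pV2 ?posrE ?mulr_gt0.
Qed.

Lemma lip_ac a b g : lip a b g -> abs_cont_on a b g.
Proof.
move=> [M [M0 hM]] eps e0.
exists (eps / (M + 1)); first by apply: divr_gt0 => //; lra.
move=> n u v huv _ hs.
have h1 : \sum_(k < n) `|g (v k) - g (u k)| <= \sum_(k < n) M * (v k - u k).
  apply: ler_sum => k _; have [h1 [h2 h3]] := huv k (ltn_ord k).
  have -> : v k - u k = `|v k - u k| by rewrite ger0_norm // subr_ge0.
  apply: hM; apply/andP; split => //; lra.
apply: (le_lt_trans h1); rewrite -mulr_sumr.
have hs0 : 0 <= \sum_(k < n) (v k - u k).
  apply: sumr_ge0 => k _; have [h1' [h2 h3]] := huv k (ltn_ord k); lra.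
have : M * \sum_(k < n) (v k - u k) <= M * (eps / (M + 1)).
  by apply: ler_wpM2l => //; exact: ltW.
have : M * (eps / (M + 1)) < eps.
  rewrite mulrA ltr_pdivrMr; last lra.
  nra.
lra.
Qed.

Lemma lip_C1 a b (phi dphi : R -> R) :
  (forall x, a <= x <= b -> is_derive x 1 phi (dphi x)) ->
  {within `[a, b], continuous dphi} -> lip a b phi.
Proof.
move=> hd hc.
have [ab|ba] := leP a b; last first.
  exists 0; split => // x y /andP [h1 h2]; lra.
have hc' : {within `[a, b], continuous (fun t => `|dphi t|)}.
  by move=> t; apply: cvg_norm; exact: hc.
have [c hc1 hc2] := EVT_max ab hc'.
exists `|dphi c|; split => // x y hx hy.
wlog xy : x y hx hy / x <= y.
  move=> H; have [h|h] := leP x y; first exact: H.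
  by rewrite -normrN opprB -(normrN (y - x)) opprB; apply: H => //; exact: ltW.
have sub : forall z, x <= z <= y -> a <= z <= b.
  move=> z /andP [h1 h2]; case/andP: hx => h3 h4; case/andP: hy => h5 h6.
  apply/andP; split; lra.
have [c' hc'1 hc'2] : exists2 c', c' \in `[x, y] & phi y - phi x = dphi c' * (y - x).
  apply: MVT_segment => //.
    move=> z; rewrite in_itv /= => /andP [h1 h2]; apply: hd; apply: sub.
    by apply/andP; split; exact: ltW.
  apply: derivable_within_continuous => z; rewrite in_itv /= => hz.
  by have [] := hd z (sub z hz).
rewrite hc'2 normrM; apply: ler_wpM2r => //.
apply: hc2; move: hc'1; rewrite !in_itv /= => hz; exact: sub.
Qed.

End Lip.

Section Endp.
Variable R : realType.
Implicit Types (D E : set R) (g : R -> R).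

Definition Pinc D g := forall t1 t2 t3, D t1 -> D t2 -> D t3 -> t1 < t2 -> t2 < t3 ->
  (g t1 < g t2 -> g t2 < g t3) /\ (g t1 <= g t2 -> g t2 <= g t3).

Lemma eqle (a b : R) : a = b -> a <= b.
Proof. by move=> ->. Qed.

Lemma cosm_sub D E g : E `<=` D -> const_or_strmono_on D g -> const_or_strmono_on E g.
Proof.
move=> sub [h|[h|h]]; [left|right; left|right; right] => x y hx hy; apply: h; exact: sub.
Qed.

Lemma cosm_opp D g : const_or_strmono_on D (fun x => - g x) -> const_or_strmono_on D g.
Proof.
case=> [h|[h|h]]; [left|right; right|right; left] => x y hx hy.
- by move/oppr_inj: (h x y hx hy).
- by move=> xy; have := h x y hx hy xy; rewrite ltrN2.
- by move=> xy; have := h x y hx hy xy; rewrite ltrN2.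
Qed.

Lemma endR D g : Pinc D g -> (exists m, D m) ->
  exists c, D c /\ const_or_strmono_on [set x | D x /\ c < x] g.
Proof.
move=> P [m Dm].
have [[t1 [t2 [D1 [D2 [h12 hg]]]]]|nA] :=
  pselect (exists t1 t2, D t1 /\ D t2 /\ t1 < t2 /\ g t1 < g t2).
  exists t2; split => //; right; left => x y [Dx t2x] [Dy xy'] xy.
  have [P1 _] := P t1 t2 x D1 D2 Dx h12 t2x.
  have [P2 _] := P t2 x y D2 Dx Dy t2x xy.
  exact: P2 (P1 hg).
have ni : forall t1 t2, D t1 -> D t2 -> t1 < t2 -> g t2 <= g t1.
  move=> t1 t2 D1 D2 h12; rewrite leNgt; apply/negP => hlt; apply: nA.
  by exists t1, t2.
have [[t2 [t3 [D2 [D3 [h23 he]]]]]|nB] :=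
  pselect (exists t2 t3, D t2 /\ D t3 /\ t2 < t3 /\ g t2 = g t3).
  exists t2; split => //; left.
  have key : forall x, D x -> t2 < x -> g x = g t2.
    move=> x Dx t2x; have [xt3|t3x] := leP x t3.
      apply/eqP; rewrite eq_le; apply/andP; split; first exact: ni.
      move: xt3; rewrite [_ <= t3]le_eqVlt => /orP [/eqP ->|xt3]; first by rewrite he.
      by rewrite he; exact: ni.
    have [_ P2] := P t2 t3 x D2 D3 Dx h23 t3x.
    have := P2 (eqle he).
    move=> h1; apply/eqP; rewrite eq_le he; apply/andP; split; last exact: h1.
    exact: ni.
  by move=> x y [Dx hx] [Dy hy]; rewrite !key.
exists m; split => //; right; right => x y [Dx _] [Dy _] xy.
rewrite lt_neqAle ni // andbT; apply/negP => /eqP e; apply: nB.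
by exists x, y.
Qed.

Lemma endL D g : Pinc D g -> (exists m, D m) ->
  exists c, D c /\ const_or_strmono_on [set x | D x /\ x < c] g.
Proof.
move=> P [m Dm].
have [[t2 [t3 [D2 [D3 [h23 hg]]]]]|nA] :=
  pselect (exists t2 t3, D t2 /\ D t3 /\ t2 < t3 /\ g t3 < g t2).
  exists t2; split => //; right; right => x y [Dx xt2] [Dy yt2] xy.
  have gy : g t2 < g y.
    rewrite ltNge; apply/negP => h.
    have [_ P2] := P y t2 t3 Dy D2 D3 yt2 h23.
    by have := P2 h; rewrite leNgt hg.
  rewrite ltNge; apply/negP => h.
  have [_ P2] := P x y t2 Dx Dy D2 xy yt2.
  by have := P2 h; rewrite leNgt gy.
have nd : forall t1 t2, D t1 -> D t2 -> t1 < t2 -> g t1 <= g t2.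
  move=> t1 t2 D1 D2 h12; rewrite leNgt; apply/negP => hlt; apply: nA.
  by exists t1, t2.
have [[t2 [t3 [D2 [D3 [h23 he]]]]]|nB] :=
  pselect (exists t2 t3, D t2 /\ D t3 /\ t2 < t3 /\ g t2 = g t3).
  exists t3; split => //; left.
  have key : forall x, D x -> x < t3 -> g x = g t3.
    move=> x Dx xt3; have [t2x|xt2] := leP t2 x.
      apply/eqP; rewrite eq_le; apply/andP; split; first exact: nd.
      move: t2x; rewrite [t2 <= _]le_eqVlt => /orP [/eqP <-|t2x]; first by rewrite he.
      by rewrite -he; exact: nd.
    apply/eqP; rewrite eq_le -he; apply/andP; split; first exact: nd.
    rewrite leNgt; apply/negP => h.
    have [P1 _] := P x t2 t3 Dx D2 D3 xt2 h23.
    by have := P1 h; rewrite he ltxx.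
  by move=> x y [Dx hx] [Dy hy]; rewrite !key.
exists m; split => //; right; left => x y [Dx _] [Dy _] xy.
rewrite lt_neqAle nd // andbT; apply/negP => /eqP e; apply: nB.
by exists x, y.
Qed.

End Endp.

Lemma det3 (R : comRingType) (p q r : R -> R) (t1 t2 t3 : R) :
  \det (\matrix_(i < 3, j < 3)
                 (nth (fun _ => 0) [:: p; q; r] i) (nth 0 [:: t1; t2; t3] j)) =
  p t1 * (q t2 * r t3 - q t3 * r t2) - p t2 * (q t1 * r t3 - q t3 * r t1)
  + p t3 * (q t1 * r t2 - q t2 * r t1).
Proof.
rewrite (expand_det_row _ 0) !big_ord_recl big_ord0 /cofactor.
rewrite !(expand_det_row _ 0) !big_ord_recl !big_ord0 /cofactor !det_mx11 /= !mxE /=.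
rewrite !expr0 !expr1 /=. ring.
Qed.

Lemma frac3 (R : realFieldType) (a b A B : R) : 0 < a -> 0 < b -> 0 <= a * B - b * A ->
  A / a <= (A + B) / (a + b) /\ (A + B) / (a + b) <= B / b.
Proof.
move=> a0 b0 h; have ab0 : 0 < a + b by lra.
split; rewrite -subr_ge0.
  have -> : (A + B) / (a + b) - A / a = (a * B - b * A) / (a * (a + b)).
    by field; rewrite !gt_eqF.
  by apply: divr_ge0 => //; apply: mulr_ge0; lra.
have -> : B / b - (A + B) / (a + b) = (a * B - b * A) / (b * (a + b)).
  by field; rewrite !gt_eqF.
by apply: divr_ge0 => //; apply: mulr_ge0; lra.
Qed.

Section Main.
Variables (R : realType) (x0 : \bar R) (T : R) (phi1 dphi1 phi2 dphi2 f : R -> R).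
Hypothesis Tx0 : (T%:E < x0)%E.
Hypothesis C1a : C1_Ico T x0 phi1 dphi1.
Hypothesis C1b : C1_Ico T x0 phi2 dphi2.
Hypothesis o21 : (fun x => phi2 x / phi1 x) @ toward x0 --> (0 : R).
Hypothesis p1pos : forall x, Ico_e T x0 x -> 0 < phi1 x.
Hypothesis p2n0 : forall x, Ico_e T x0 x -> phi2 x != 0.
Hypothesis Wpos : forall x, Ico_e T x0 x -> 0 < Wr phi1 dphi1 phi2 dphi2 x.
Hypothesis gc : gen_convex phi1 phi2 (Ioo_e T x0) f.

Local Notation J := (Ioo_e T x0).
Definition HH x := f x / phi1 x.
Definition UU x := phi2 x / phi1 x.
Definition WW x := Wr phi1 dphi1 phi2 dphi2 x.
Definition dUU x := WW x / phi1 x ^+ 2.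
Definition SS x y := (HH y - HH x) / (UU y - UU x).

Lemma JT x : J x -> T < x. Proof. by case. Qed.
Lemma Jlt0 x : J x -> (x%:E < x0)%E. Proof. by case. Qed.
Lemma JI x : J x -> Ico_e T x0 x. Proof. by case=> ? ?; split => //; exact: ltW. Qed.
Lemma TI : Ico_e T x0 T. Proof. by split; [exact: lexx|]. Qed.
Lemma p1J x : J x -> 0 < phi1 x. Proof. by move/JI; exact: p1pos. Qed.
Lemma p1n0 x : J x -> phi1 x != 0. Proof. by move/p1J/lt0r_neq0. Qed.
Lemma WJ x : J x -> 0 < WW x. Proof. by move/JI; exact: Wpos. Qed.

Lemma Jbet x y z : J x -> J y -> x <= z -> z <= y -> J z.
Proof.
move=> [Tx _] [_ yx] xz zy; split; first exact: lt_le_trans Tx xz.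
by apply: le_lt_trans yx; rewrite lee_fin.
Qed.

Lemma Jright x : J x -> exists y, J y /\ x < y.
Proof.
move=> [Tx xx]; have [y [xy yx]] := Jright_gen xx.
by exists y; split => //; split => //; exact: lt_trans xy.
Qed.

Lemma Jleft x : J x -> exists y, J y /\ y < x.
Proof.
move=> [Tx xx]; exists ((T + x)/2); split; last lra.
split; first lra.
by apply: lt_trans xx; rewrite lte_fin; lra.
Qed.

Lemma Jnear x : J x -> \forall h \near (0:R), J (x + h).
Proof. by move=> [Tx xx]; apply: filterS (Jopen Tx xx) => h []; split. Qed.

Lemma Jnear' x : J x -> \forall h \near (0:R)^', J (x + h).
Proof. by move=> /Jnear; exact: n0_dn. Qed.

Lemma Jex : exists m, J m.
Proof. by have [y [Ty yx]] := Jright_gen Tx0; exists y; split. Qed.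

Lemma qp1 x : J x -> qt phi1 x @ (0:R)^' --> dphi1 x.
Proof. by move=> Jx; case: C1a => d _ _; exact/isd_qt/d. Qed.
Lemma qp2 x : J x -> qt phi2 x @ (0:R)^' --> dphi2 x.
Proof. by move=> Jx; case: C1b => d _ _; exact/isd_qt/d. Qed.

Lemma p1near x : J x -> \forall h \near (0:R)^', phi1 (x + h) != 0.
Proof. by move/Jnear'; apply: filterS => h; exact: p1n0. Qed.

Lemma qU x : J x -> qt UU x @ (0:R)^' --> dUU x.
Proof.
move=> Jx; have := qt_div (qp2 Jx) (qp1 Jx) (p1n0 Jx) (p1near Jx).
suff -> : (dphi2 x * phi1 x - phi2 x * dphi1 x) / phi1 x ^+ 2 = dUU x by [].
by rewrite /dUU /WW /Wr; congr (_ / _); ring.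
Qed.

Lemma dUpos x : J x -> 0 < dUU x.
Proof. by move=> Jx; apply: divr_gt0; [exact: WJ| apply: exprn_gt0; exact: p1J]. Qed.

Lemma Uinc x y : J x -> J y -> x < y -> UU x < UU y.
Proof.
move=> Jx Jy xy.
have [a [Ja ax]] := Jleft Jx; have [b [Jb yb]] := Jright Jy.
have Jab z : z \in `]a, b[ -> J z.
  by rewrite in_itv /= => /andP [h1 h2]; apply: (Jbet Ja Jb); exact: ltW.
have dU z : z \in `]a, b[ -> derivable UU z 1 /\ derive1 UU z = dUU z.
  by move/Jab => Jz; exact: qt_derive (qU Jz).
apply: (@gtr0_derive1_lt_oo _ UU a b).
- by move=> z /dU [].
- by move=> z hz; have [_ ->] := dU z hz; apply: dUpos; exact: Jab.
- move=> z hz; apply/differentiable_continuous/derivable1_diffP.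
  have hz' : z \in `]a, b[ by move: hz; rewrite inE.
  by have [] := dU z hz'.
- by rewrite in_itv /= ax (lt_trans xy yb).
- by rewrite in_itv /= yb (lt_trans ax xy).
- exact: xy.
Qed.

Lemma Uneg x : J x -> UU x < 0.
Proof.
move=> Jx; have [y [Jy xy]] := Jright Jx.
apply: (lt_le_trans (Uinc Jx Jy xy)).
have ev : \forall z \near toward x0, UU y <= UU z.
  apply: (tw_intro (Jlt0 Jy)) => z yz zx; apply: ltW; apply: Uinc => //.
  by split => //; exact: lt_trans (JT Jy) yz.
have := @closed_cvg _ _ (toward x0) _ UU [set r | UU y <= r] (@closed_ge _ (UU y)) ev 0 o21; exact.
Qed.

Lemma pT_cont (phi dphi : R -> R) : C1_Ico T x0 phi dphi ->
  (fun h => phi (T + h)) @ (0:R)^'+ --> phi T.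
Proof.
case=> _ hq _.
have e : \forall h \near (0:R)^'+,
    phi T + h * ((phi (T + h) - phi T) / h) = phi (T + h).
  near=> h; have hn : h != 0 by near: h; exact: nbhs_right_neq.
  by rewrite mulrC divfK // addrC subrK.
have h1 : (fun h => phi T + h * ((phi (T + h) - phi T) / h)) @ (0:R)^'+
          --> phi T + 0 * dphi T.
  apply: cvgD; first exact: cvg_cst.
  by apply: cvgM => //; exact: cvg_within.
rewrite mul0r addr0 in h1; exact: near_eq_cvgT e h1.
Unshelve. all: by end_near. Qed.

Lemma UT x : J x -> UU T <= UU x.
Proof.
move=> Jx.
have c : (fun h => UU (T + h)) @ (0:R)^'+ --> UU T.
  rewrite /UU; apply: cvgM; first exact: pT_cont C1b.
  apply: cvgV; first exact: lt0r_neq0 (p1pos TI).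
  exact: pT_cont C1a.
have xT : 0 < x - T by rewrite subr_gt0; exact: JT.
have ev : \forall h \near (0:R)^'+, UU (T + h) <= UU x.
  near=> h.
  have h0 : 0 < h by near: h; exact: nbhs_right_gt.
  have h1 : h < x - T by near: h; exact: nbhs_right_lt.
  apply: ltW; apply: Uinc => //; last lra.
  split; first lra.
  by apply: le_lt_trans (Jlt0 Jx); rewrite lee_fin; lra.
have := @closed_cvg _ _ _ _ _ [set r | r <= UU x] (@closed_le _ (UU x)) ev _ c; exact.
Unshelve. all: by end_near. Qed.

Lemma core t1 t2 t3 : J t1 -> J t2 -> J t3 -> t1 < t2 -> t2 < t3 ->
  0 <= (UU t2 - UU t1) * (HH t3 - HH t2) - (UU t3 - UU t2) * (HH t2 - HH t1).
Proof.
move=> J1 J2 J3 h12 h23; have := gc J1 J2 J3 h12 h23; rewrite det3 => hd.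
have n1 := p1n0 J1; have n2 := p1n0 J2; have n3 := p1n0 J3.
have -> : (UU t2 - UU t1) * (HH t3 - HH t2) - (UU t3 - UU t2) * (HH t2 - HH t1) =
  (phi1 t1 * (phi2 t2 * f t3 - phi2 t3 * f t2) - phi1 t2 * (phi2 t1 * f t3 - phi2 t3 * f t1)
  + phi1 t3 * (phi2 t1 * f t2 - phi2 t2 * f t1)) / (phi1 t1 * phi1 t2 * phi1 t3).
  by rewrite /UU /HH; field; rewrite n1 n2 n3.
apply: divr_ge0 => //; apply: ltW; apply: mulr_gt0; [apply: mulr_gt0|]; exact: p1J.
Qed.

Lemma dU_gt x y : J x -> J y -> x < y -> 0 < UU y - UU x.
Proof. by move=> Jx Jy xy; rewrite subr_gt0; exact: Uinc. Qed.

Lemma chord t1 t2 t3 : J t1 -> J t2 -> J t3 -> t1 < t2 -> t2 < t3 ->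
  SS t1 t2 <= SS t1 t3 /\ SS t1 t3 <= SS t2 t3.
Proof.
move=> J1 J2 J3 h12 h23.
have := frac3 (dU_gt J1 J2 h12) (dU_gt J2 J3 h23) (core J1 J2 J3 h12 h23).
have e1 : (HH t2 - HH t1) + (HH t3 - HH t2) = HH t3 - HH t1 by ring.
have e2 : (UU t2 - UU t1) + (UU t3 - UU t2) = UU t3 - UU t1 by ring.
by rewrite /SS e1 e2.
Qed.

Lemma Smono p q r s : J p -> J q -> J r -> J s -> p < q -> r < s -> p <= r -> q <= s ->
  SS p q <= SS r s.
Proof.
move=> Jp Jq Jr Js pq rs pr qs.
have h1 : SS p q <= SS p s.
  move: qs; rewrite le_eqVlt => /orP [/eqP -> //| qs].
  by have [] := chord Jp Jq Js pq qs.
apply: (le_trans h1).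
move: pr; rewrite le_eqVlt => /orP [/eqP -> //| pr].
by have [] := chord Jp Jr Js pr rs.
Qed.

Lemma Ssym x y : SS x y = SS y x.
Proof.
rewrite /SS; have [e|hn] := eqVneq (UU y - UU x) 0.
  have e' : UU x - UU y = 0 by rewrite -opprB e oppr0.
  by rewrite e e' !invr0 !mulr0.
by field; rewrite hn -opprB oppr_eq0 hn.
Qed.

Lemma Hdec x y : J x -> J y -> x < y -> HH y = HH x + SS x y * (UU y - UU x).
Proof.
move=> Jx Jy xy; rewrite /SS divfK; first by rewrite addrC subrK.
exact: lt0r_neq0 (dU_gt Jx Jy xy).
Qed.

Definition LS x := [set z | exists y, [/\ J y, y < x & z = SS y x]].
Definition Lft x := sup (LS x).

Lemma LS_ub x z : J x -> J z -> x < z -> ubound (LS x) (SS x z).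
Proof.
move=> Jx Jz xz w [y [Jy yx ->]].
by apply: Smono => //; exact: ltW.
Qed.

Lemma LS_hs x : J x -> has_sup (LS x).
Proof.
move=> Jx; split.
  by have [y [Jy yx]] := Jleft Jx; exists (SS y x); exists y.
by have [z [Jz xz]] := Jright Jx; exists (SS x z); exact: LS_ub.
Qed.

Lemma Lft_ge x y : J x -> J y -> y < x -> SS y x <= Lft x.
Proof. by move=> Jx Jy yx; apply: sup_upper_bound; [exact: LS_hs| exists y]. Qed.

Lemma Lft_le x z : J x -> J z -> x < z -> Lft x <= SS x z.
Proof. by move=> Jx Jz xz; apply: ge_sup; [case: (LS_hs Jx)| exact: LS_ub]. Qed.

Lemma Lft_adh x e : J x -> 0 < e -> exists y, [/\ J y, y < x & Lft x - e < SS y x].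
Proof.
move=> Jx e0; have [w [y [Jy yx ->]] hw] := sup_adherent e0 (LS_hs Jx).
by exists y.
Qed.

Lemma Lft_inc x y : J x -> J y -> x < y -> Lft x <= Lft y.
Proof. by move=> Jx Jy xy; apply: (le_trans (Lft_le Jx Jy xy)); exact: Lft_ge. Qed.

Definition Kink x := exists2 e, 0 < e & forall z, J z -> x < z -> Lft x + e <= SS x z.

Lemma nk_right x e : J x -> ~ Kink x -> 0 < e ->
  exists z, [/\ J z, x < z & SS x z < Lft x + e].
Proof.
move=> Jx nk e0; apply: contrapT => hne; apply: nk; exists e => // z Jz xz.
rewrite leNgt; apply/negP => hlt; apply: hne; by exists z.
Qed.

Lemma nk_cvg x : J x -> ~ Kink x -> (fun h => SS x (x + h)) @ (0:R)^' --> Lft x.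
Proof.
move=> Jx nk; apply/cvgrPdist_lt => e e0.
have [y [Jy yx hy]] := Lft_adh Jx e0.
have [z [Jz xz hz]] := nk_right Jx nk e0.
have d0 : 0 < Num.min (x - y) (z - x) by rewrite lt_min !subr_gt0 yx xz.
have hd : \forall h \near (0:R)^', `|h| < Num.min (x - y) (z - x).
  exact: (@dnbhs0_lt R R^o _ d0).
near=> h.
have hn : h != 0 by near: h; exact: nbhs_dnbhs_neq.
have := hd; move=> _.
have : `|h| < Num.min (x - y) (z - x) by near: h; exact: hd.
rewrite lt_min => /andP [h1 h2].
have hn1 : - `|h| <= h by rewrite lerNl ler_normr lexx orbT.
have hn2 := ler_norm h.
have Jxh : J (x + h) by apply: (Jbet Jy Jz); lra.
rewrite ltr_norml; case: (ltgtP h 0) hn => // hs _.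
- have Hs : SS y x <= SS (x + h) x by apply: Smono => //; lra.
  have Hl : SS (x + h) x <= Lft x by apply: Lft_ge => //; lra.
  rewrite Ssym; apply/andP; split; lra.
- have Hs : SS x (x + h) <= SS x z by apply: Smono => //; lra.
  have Hl : Lft x <= SS x (x + h) by apply: Lft_le => //; lra.
  apply/andP; split; lra.
Unshelve. all: by end_near. Qed.

Lemma Udiff x y : J x -> J y -> x != y -> UU y - UU x != 0.
Proof.
move=> Jx Jy; rewrite neq_lt => /orP [xy|yx].
  by apply: lt0r_neq0; exact: dU_gt.
by rewrite -opprB oppr_eq0; apply: lt0r_neq0; exact: dU_gt.
Qed.

Lemma qH_eq x : J x -> \forall h \near (0:R)^', SS x (x + h) * qt UU x h = qt HH x h.
Proof.
move=> Jx; near=> h.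
have hn : h != 0 by near: h; exact: nbhs_dnbhs_neq.
have Jh : J (x + h) by near: h; exact: Jnear'.
have ud : UU (x + h) - UU x != 0.
  by apply: Udiff => //; rewrite -subr_eq0 opprD addrA subrr add0r oppr_eq0.
by rewrite /SS /qt; field; rewrite hn ud.
Unshelve. all: by end_near. Qed.

Lemma qH x : J x -> ~ Kink x -> qt HH x @ (0:R)^' --> Lft x * dUU x.
Proof.
move=> Jx nk; apply: near_eq_cvgT (qH_eq Jx) _.
apply: cvgM; [exact: nk_cvg| exact: qU].
Qed.

Lemma f_eq x : J x -> \forall h \near (0:R), phi1 (x + h) * HH (x + h) = f (x + h).
Proof.
move=> Jx; apply: filterS (Jnear Jx) => h Jh.
by rewrite /HH mulrC divfK //; exact: p1n0.
Qed.

Definition fd x := dphi1 x * HH x + phi1 x * (Lft x * dUU x).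

Lemma qf x : J x -> ~ Kink x -> qt f x @ (0:R)^' --> fd x.
Proof.
move=> Jx nk; apply: (qt_near (f_eq Jx)).
exact: qt_mul (qp1 Jx) (qH Jx nk).
Qed.

Lemma kink_nd x : J x -> Kink x -> ~ derivable f x 1.
Proof.
move=> Jx [e e0 he] df.
have qfx := derive_qt df.
have qHx := qt_div qfx (qp1 Jx) (p1n0 Jx) (p1near Jx).
set hd := (_ / _) in qHx.
have eS : \forall h \near (0:R)^', qt HH x h * (qt UU x h)^-1 = SS x (x + h).
  near=> h.
  have hn : h != 0 by near: h; exact: nbhs_dnbhs_neq.
  have Jh : J (x + h) by near: h; exact: Jnear'.
  have ud : UU (x + h) - UU x != 0.
    by apply: Udiff => //; rewrite -subr_eq0 opprD addrA subrr add0r oppr_eq0.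
  by rewrite /SS /qt; field; rewrite hn ud.
have cS : (fun h => SS x (x + h)) @ (0:R)^' --> hd * (dUU x)^-1.
  apply: near_eq_cvgT eS _; apply: cvgM => //.
  by apply: cvgV; [exact: lt0r_neq0 (dUpos Jx)| exact: qU].
have cR := cvg_dn_right cS; have cL := cvg_dn_left cS.
have evR : \forall h \near (0:R)^'+, Lft x + e <= SS x (x + h).
  have := dn_right (Jnear' Jx); apply: filterS2 (nbhs_right_gt 0) => h h0 Jh.
  by apply: he => //; lra.
have evL : \forall h \near (0:R)^'-, SS x (x + h) <= Lft x.
  have := dn_left (Jnear' Jx); apply: filterS2 (nbhs_left_lt 0) => h h0 Jh.
  by rewrite Ssym; apply: Lft_ge => //; lra.
have i1 := @closed_cvg _ _ _ _ _ [set r | Lft x + e <= r] (@closed_ge _ (Lft x + e)) evR _ cR.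
have i2 := @closed_cvg _ _ _ _ _ [set r | r <= Lft x] (@closed_le _ (Lft x)) evL _ cL.
have j1 : Lft x + e <= hd * (dUU x)^-1 by apply: i1; exact: _.
have j2 : hd * (dUU x)^-1 <= Lft x by apply: i2; exact: _.
lra.
Unshelve. all: by end_near. Qed.

Lemma derf x : J x -> derivable f x 1 -> ~ Kink x /\ derive1 f x = fd x.
Proof.
move=> Jx df; have nk : ~ Kink x by move=> k; exact: kink_nd Jx k df.
by split => //; have [_ ->] := qt_derive (qf Jx nk).
Qed.

Lemma nk_der x : J x -> ~ Kink x -> derivable f x 1.
Proof. by move=> Jx nk; have [] := qt_derive (qf Jx nk). Qed.

Definition NN := [set x | J x /\ ~ derivable f x 1].

Lemma NN_kink x : NN x -> Kink x.
Proof. by case=> Jx nd; apply: contrapT => nk; apply: nd; exact: nk_der. Qed.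

Lemma NN_count : countable NN.
Proof.
have hq : forall x, exists r : rat, Kink x ->
    Lft x < ratr r /\ forall z, J z -> x < z -> ratr r < SS x z.
  move=> x; have [[e e0 he]|nk] := pselect (Kink x); last by exists 0%Q.
  have : Lft x < Lft x + e by lra.
  move=> /rat_in_itvoo [r]; rewrite in_itv /= => /andP [r1 r2].
  exists r => _; split => // z Jz xz; apply: (lt_le_trans r2); exact: he.
have [q hq'] := boolp.choice hq.
apply/countable_injP; exists (fun x => pickle (q x)) => x y.
rewrite !inE => Nx Ny /(pcan_inj pickleK) qe.
have kx := NN_kink Nx; have ky := NN_kink Ny.
case: Nx => Jx _; case: Ny => Jy _.
have [kx1 kx2] := hq' x kx; have [ky1 ky2] := hq' y ky.
case: (ltgtP x y) => // xy.
- have := kx2 y Jy xy; have := Lft_ge Jy Jx xy; rewrite qe; lra.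
- have := ky2 x Jx xy; have := Lft_ge Jx Jy xy; rewrite -qe; lra.
Qed.

Lemma DN x : (J `\` NN) x -> J x /\ derivable f x 1.
Proof.
case=> Jx nN; split => //; apply: contrapT => nd; apply: nN; by split.
Qed.

Lemma f_HH x : J x -> f x = phi1 x * HH x.
Proof. by move=> Jx; rewrite /HH mulrC divfK //; exact: p1n0. Qed.

Lemma f2_eq x : J x -> derivable f x 1 ->
  f2star phi1 dphi1 phi2 dphi2 f x = Lft x.
Proof.
move=> Jx df; have [_ e] := derf Jx df.
have w := lt0r_neq0 (WJ Jx); have p := p1n0 Jx.
rewrite /f2star /Wr e (f_HH Jx) /fd /dUU.
move: w; rewrite /WW /Wr => w.
by field; rewrite w p.
Qed.

Lemma f1_eq x : J x -> derivable f x 1 ->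
  f1star phi1 dphi1 phi2 dphi2 f x = HH x - UU x * Lft x.
Proof.
move=> Jx df; have [_ e] := derf Jx df.
have w := lt0r_neq0 (WJ Jx); have p := p1n0 Jx.
rewrite /f1star /Wr e (f_HH Jx) /fd /dUU /UU.
move: w; rewrite /WW /Wr => w.
by field; rewrite w p.
Qed.

Lemma F_eq x : J x -> derivable f x 1 ->
  Fstar T phi1 dphi1 phi2 dphi2 f x = phi1 T * (HH x + (UU T - UU x) * Lft x).
Proof.
move=> Jx df; rewrite /Fstar f1_eq // f2_eq //.
have pT := lt0r_neq0 (p1pos TI).
rewrite /UU; field; by rewrite ?pT ?(p1n0 Jx).
Qed.

Lemma f2_incr : incr_on (J `\` NN) (f2star phi1 dphi1 phi2 dphi2 f).
Proof.
move=> x y /DN [Jx dx] /DN [Jy dy]; rewrite le_eqVlt => /orP [/eqP ->//| xy].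
by rewrite !f2_eq //; exact: Lft_inc.
Qed.

Lemma f1_incr : incr_on (J `\` NN) (f1star phi1 dphi1 phi2 dphi2 f).
Proof.
move=> x y /DN [Jx dx] /DN [Jy dy]; rewrite le_eqVlt => /orP [/eqP ->//| xy].
rewrite !f1_eq // (Hdec Jx Jy xy).
have h1 : 0 <= SS x y - Lft x by rewrite subr_ge0; exact: Lft_le.
have h2 : 0 <= UU y - UU x by apply: ltW; exact: dU_gt.
have h3 : 0 <= - UU y by rewrite oppr_ge0; apply: ltW; exact: Uneg.
have h4 : 0 <= Lft y - Lft x by rewrite subr_ge0; exact: Lft_inc.
have := mulr_ge0 h1 h2; have := mulr_ge0 h3 h4.
move=> a b; rewrite -subr_ge0.
have -> : HH x + SS x y * (UU y - UU x) - UU y * Lft y - (HH x - UU x * Lft x) =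
  (SS x y - Lft x) * (UU y - UU x) + (- UU y) * (Lft y - Lft x) by ring.
exact: addr_ge0.
Qed.

Lemma F_decr : decr_on (J `\` NN) (Fstar T phi1 dphi1 phi2 dphi2 f).
Proof.
move=> x y /DN [Jx dx] /DN [Jy dy]; rewrite le_eqVlt => /orP [/eqP ->//| xy].
rewrite !F_eq // (Hdec Jx Jy xy).
rewrite ler_pM2l; last exact: p1pos TI.
have h1 : 0 <= Lft y - SS x y by rewrite subr_ge0; exact: Lft_ge.
have h2 : 0 <= UU y - UU x by apply: ltW; exact: dU_gt.
have h3 : 0 <= UU x - UU T by rewrite subr_ge0; exact: UT.
have h4 : 0 <= Lft y - Lft x by rewrite subr_ge0; exact: Lft_inc.
have := mulr_ge0 h1 h2; have := mulr_ge0 h3 h4.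
move=> a b; rewrite -subr_ge0.
have -> : HH x + (UU T - UU x) * Lft x - (HH x + SS x y * (UU y - UU x) + (UU T - UU y) * Lft y) =
  (Lft y - SS x y) * (UU y - UU x) + (UU x - UU T) * (Lft y - Lft x) by ring.
exact: addr_ge0.
Qed.

Lemma p2neg x : J x -> phi2 x < 0.
Proof.
move=> Jx; have := Uneg Jx; rewrite /UU => h.
have -> : phi2 x = phi2 x / phi1 x * phi1 x by rewrite divfK // p1n0.
by rewrite pmulr_llt0 //; exact: p1J.
Qed.

Lemma sgF_incr : incr_on (J `\` NN)
  (fun t => Num.sg (phi2 t) * Fstar T phi1 dphi1 phi2 dphi2 f t).
Proof.
move=> x y Dx Dy xy; have [Jx _] := DN Dx; have [Jy _] := DN Dy.
rewrite !ltr0_sg ?p2neg // !mulN1r lerN2; exact: F_decr.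
Qed.

Lemma Jab a b x : J a -> J b -> a <= x <= b -> J x.
Proof. by move=> Ja Jb /andP [h1 h2]; exact: Jbet Ja Jb h1 h2. Qed.

Lemma phi_lip (phi dphi : R -> R) a b : C1_Ico T x0 phi dphi -> J a -> J b -> lip a b phi.
Proof.
case=> hd _ hc Ja Jb; apply: lip_C1.
  by move=> x hx; apply: hd; exact: Jab Ja Jb hx.
apply: continuous_subspaceW hc => x /=; rewrite in_itv /= => hx.
by apply: JI; exact: Jab Ja Jb hx.
Qed.

Lemma UU_lip a b : J a -> J b -> lip a b UU.
Proof.
move=> Ja Jb.
have [ab|ba] := leP a b; last by exists 0; split => // x y /andP [h1 h2]; lra.
have cont : {within `[a, b], continuous phi1}.
  apply: derivable_within_continuous => x; rewrite in_itv /= => hx.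
  by case: C1a => hd _ _; have [] := hd x (Jab Ja Jb hx).
have [c hc1 hc2] := EVT_min ab cont.
have Jc : J c by apply: (Jab Ja Jb); move: hc1; rewrite in_itv.
have := lip_mul (phi_lip C1b Ja Jb) (lip_inv (p1J Jc) _ (phi_lip C1a Ja Jb)).
apply; move=> x hx; apply: hc2; by rewrite in_itv.
Qed.

Lemma HH_lip a b : J a -> J b -> lip a b HH.
Proof.
move=> Ja Jb.
have [a' [Ja' a'a]] := Jleft Ja; have [b' [Jb' bb']] := Jright Jb.
have [MU [MU0 hU]] := UU_lip Ja Jb.
set K := `|SS a' a| + `|SS b b'|.
have K0 : 0 <= K by rewrite addr_ge0.
have hK : forall x y, a <= x <= b -> a <= y <= b -> x < y -> `|SS x y| <= K.
  move=> x y hx hy xy.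
  have Jx := Jab Ja Jb hx; have Jy := Jab Ja Jb hy.
  case/andP: hx => hx1 hx2; case/andP: hy => hy1 hy2.
  have l1 : SS a' a <= SS x y by apply: Smono => //; lra.
  have l2 : SS x y <= SS b b' by apply: Smono => //; lra.
  have n2 : - `|SS a' a| <= SS a' a by rewrite lerNl ler_normr lexx orbT.
  have n3 := ler_norm (SS b b').
  have n4 := normr_ge0 (SS a' a); have n5 := normr_ge0 (SS b b').
  rewrite ler_norml; apply/andP; split; rewrite /K; lra.
exists (K * MU); split; first exact: mulr_ge0.
move=> x y hx hy.
wlog xy : x y hx hy / x <= y.
  move=> H; have [h|h] := leP x y; first exact: H.
  by rewrite -normrN opprB -(normrN (y - x)) opprB; apply: H => //; exact: ltW.
move: xy; rewrite le_eqVlt => /orP [/eqP ->|xy]; first by rewrite !subrr normr0 mulr0.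
have Jx := Jab Ja Jb hx; have Jy := Jab Ja Jb hy.
rewrite (Hdec Jx Jy xy) addrC addKr normrM -mulrA.
apply: ler_pM => //; first exact: hK.
exact: hU.
Qed.

Lemma part1 : forall a b : R, T < a -> a <= b -> (b%:E < x0)%E -> abs_cont_on a b f.
Proof.
move=> a b Ta ab bx.
have Jb : J b by split => //; exact: lt_le_trans Ta ab.
have Ja : J a by split => //; apply: le_lt_trans bx; rewrite lee_fin.
apply: lip_ac; apply: (lip_ext _ (lip_mul (phi_lip C1a Ja Jb) (HH_lip Ja Jb))).
by move=> x hx; rewrite -f_HH //; exact: Jab Ja Jb hx.
Qed.

Definition PH (c1 c2 : R) x := c1 * phi1 x + c2 * phi2 x.
Definition GG (a1 a2 c1 c2 : R) x := (f x + a1 * phi1 x + a2 * phi2 x) / PH c1 c2 x.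
Definition LL (c1 c2 : R) x := c1 + c2 * UU x.

Lemma PH_LL c1 c2 x : J x -> PH c1 c2 x = phi1 x * LL c1 c2 x.
Proof. by move=> Jx; rewrite /PH /LL /UU; field; exact: p1n0. Qed.

Lemma PH_n0 c1 c2 x : J x -> LL c1 c2 x != 0 -> PH c1 c2 x != 0.
Proof. by move=> Jx hl; rewrite PH_LL // mulf_neq0 // p1n0. Qed.

Lemma g_ident a1 a2 c1 c2 t1 t2 t3 : J t1 -> J t2 -> J t3 ->
  LL c1 c2 t1 != 0 -> LL c1 c2 t2 != 0 -> LL c1 c2 t3 != 0 ->
  (UU t2 - UU t1) * LL c1 c2 t3 * (GG a1 a2 c1 c2 t3 - GG a1 a2 c1 c2 t2)
  - (UU t3 - UU t2) * LL c1 c2 t1 * (GG a1 a2 c1 c2 t2 - GG a1 a2 c1 c2 t1)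
  = (UU t2 - UU t1) * (HH t3 - HH t2) - (UU t3 - UU t2) * (HH t2 - HH t1).
Proof.
move=> J1 J2 J3 l1 l2 l3.
have q1 := PH_n0 J1 l1; have q2 := PH_n0 J2 l2; have q3 := PH_n0 J3 l3.
have n1 := p1n0 J1; have n2 := p1n0 J2; have n3 := p1n0 J3.
move: q1 q2 q3 l1 l2 l3; rewrite /GG /PH /LL /UU /HH => q1 q2 q3 l1 l2 l3.
by field; rewrite ?q1 ?q2 ?q3 ?n1 ?n2 ?n3.
Qed.

Lemma pinc_pos a1 a2 c1 c2 (D : set R) : D `<=` J -> (forall x, D x -> 0 < LL c1 c2 x) ->
  Pinc D (GG a1 a2 c1 c2).
Proof.
move=> DJ hp t1 t2 t3 D1 D2 D3 h12 h23.
have J1 := DJ _ D1; have J2 := DJ _ D2; have J3 := DJ _ D3.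
have e := g_ident a1 a2 J1 J2 J3 (lt0r_neq0 (hp _ D1)) (lt0r_neq0 (hp _ D2)) (lt0r_neq0 (hp _ D3)).
have c := core J1 J2 J3 h12 h23; rewrite -e in c.
have A0 : 0 < (UU t2 - UU t1) * LL c1 c2 t3 by apply: mulr_gt0; [exact: dU_gt| exact: hp].
have B0 : 0 < (UU t3 - UU t2) * LL c1 c2 t1 by apply: mulr_gt0; [exact: dU_gt| exact: hp].
move: c; set A := _ * LL c1 c2 t3; set B := _ * LL c1 c2 t1.
set g1 := GG _ _ _ _ t1; set g2 := GG _ _ _ _ t2; set g3 := GG _ _ _ _ t3 => c.
split => h.
  have : 0 < B * (g2 - g1) by apply: mulr_gt0 => //; rewrite subr_gt0.
  move=> h'; have : 0 < A * (g3 - g2) by lra.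
  by rewrite pmulr_rgt0 // subr_gt0.
have : 0 <= B * (g2 - g1) by apply: mulr_ge0; [exact: ltW| rewrite subr_ge0].
move=> h'; have : 0 <= A * (g3 - g2) by lra.
by rewrite pmulr_rge0 // subr_ge0.
Qed.

Lemma pinc_neg a1 a2 c1 c2 (D : set R) : D `<=` J -> (forall x, D x -> LL c1 c2 x < 0) ->
  Pinc D (fun x => - GG a1 a2 c1 c2 x).
Proof.
move=> DJ hp t1 t2 t3 D1 D2 D3 h12 h23.
have J1 := DJ _ D1; have J2 := DJ _ D2; have J3 := DJ _ D3.
have e := g_ident a1 a2 J1 J2 J3 (ltr0_neq0 (hp _ D1)) (ltr0_neq0 (hp _ D2)) (ltr0_neq0 (hp _ D3)).
have c := core J1 J2 J3 h12 h23; rewrite -e in c.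
have A0 : 0 < (UU t2 - UU t1) * - LL c1 c2 t3.
  by apply: mulr_gt0; [exact: dU_gt| rewrite oppr_gt0; exact: hp].
have B0 : 0 < (UU t3 - UU t2) * - LL c1 c2 t1.
  by apply: mulr_gt0; [exact: dU_gt| rewrite oppr_gt0; exact: hp].
move: c A0 B0; rewrite !mulrN.
set A := _ * LL c1 c2 t3; set B := _ * LL c1 c2 t1.
set g1 := GG _ _ _ _ t1; set g2 := GG _ _ _ _ t2; set g3 := GG _ _ _ _ t3 => c A0 B0.
split => h.
  have : 0 < - B * (- g2 + g1) by apply: mulr_gt0 => //; lra.
  move=> h'; have : 0 < - A * (- g3 + g2) by lra.
  by rewrite pmulr_rgt0 //; lra.
have : 0 <= - B * (- g2 + g1) by apply: mulr_ge0; [exact: ltW| lra].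
move=> h'; have : 0 <= - A * (- g3 + g2) by lra.
by rewrite pmulr_rge0 //; lra.
Qed.

Definition sgn_below (k : R -> R) z :=
  (forall x, J x -> x < z -> 0 < k x) \/ (forall x, J x -> x < z -> k x < 0).
Definition sgn_above (k : R -> R) z :=
  (forall x, J x -> z < x -> 0 < k x) \/ (forall x, J x -> z < x -> k x < 0).

Lemma sgn_inc (k : R -> R) : (forall x y, J x -> J y -> x < y -> k x < k y) ->
  (exists z, J z /\ sgn_below k z) /\ (exists z, J z /\ sgn_above k z).
Proof.
move=> hk; have [m Jm] := Jex; split.
  have [km|km] := leP (k m) 0.
    by exists m; split => //; right => x Jx xm; exact: lt_le_trans (hk _ _ Jx Jm xm) km.
  have [[z [Jz [zm kz]]]|nz] := pselect (exists z, J z /\ z < m /\ k z <= 0).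
    by exists z; split => //; right => x Jx xz; exact: lt_le_trans (hk _ _ Jx Jz xz) kz.
  exists m; split => //; left => x Jx xm; rewrite ltNge; apply/negP => h; apply: nz.
  by exists x.
have [km|km] := leP 0 (k m).
  by exists m; split => //; left => x Jx xm; exact: le_lt_trans km (hk _ _ Jm Jx xm).
have [[z [Jz [zm kz]]]|nz] := pselect (exists z, J z /\ m < z /\ 0 <= k z).
  by exists z; split => //; left => x Jx xz; exact: le_lt_trans kz (hk _ _ Jz Jx xz).
exists m; split => //; right => x Jx xm; rewrite ltNge; apply/negP => h; apply: nz.
by exists x.
Qed.

Lemma sgn_LL c1 c2 : (c1 != 0) || (c2 != 0) ->
  (exists z, J z /\ sgn_below (LL c1 c2) z) /\ (exists z, J z /\ sgn_above (LL c1 c2) z).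
Proof.
move=> hc; have [m Jm] := Jex.
have [c20|c2n] := eqVneq c2 0.
  rewrite c20 eqxx orbF in hc.
  have e : forall x, LL c1 c2 x = c1 by move=> x; rewrite /LL c20 mul0r addr0.
  have [c1n|c1p|c1z] := ltgtP c1 0; last by rewrite c1z eqxx in hc.
    by split; exists m; split => //; right => x _ _; rewrite e.
  by split; exists m; split => //; left => x _ _; rewrite e.
have [c2n'|c2p|c2z] := ltgtP c2 0; last by rewrite c2z eqxx in c2n.
  have hk : forall x y, J x -> J y -> x < y -> - LL c1 c2 x < - LL c1 c2 y.
    move=> x y Jx Jy xy; rewrite ltrN2 /LL ltrD2l ltr_nM2l //; exact: Uinc.
  have [[z [Jz hz]] [z' [Jz' hz']]] := sgn_inc hk.
  split; [exists z| exists z']; split => //.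
    by case: hz => h; [right|left] => x Jx xz; have := h x Jx xz; rewrite ?oppr_gt0 ?oppr_lt0.
  by case: hz' => h; [right|left] => x Jx xz; have := h x Jx xz; rewrite ?oppr_gt0 ?oppr_lt0.
have hk : forall x y, J x -> J y -> x < y -> LL c1 c2 x < LL c1 c2 y.
  move=> x y Jx Jy xy; rewrite /LL ltrD2l ltr_pM2l //; exact: Uinc.
exact: sgn_inc hk.
Qed.

Lemma part3 a1 a2 c1 c2 : (c1 != 0) || (c2 != 0) ->
  (exists b : R, [/\ T < b, (b%:E < x0)%E,
        (forall x, T < x -> x < b -> PH c1 c2 x != 0)
      & const_or_strmono_on [set x | T < x /\ x < b] (GG a1 a2 c1 c2)]) /\
  (exists a : R, [/\ T < a, (a%:E < x0)%E,
        (forall x, Ioo_e a x0 x -> PH c1 c2 x != 0)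
      & const_or_strmono_on (Ioo_e a x0) (GG a1 a2 c1 c2)]).
Proof.
move=> hc; have [[z [Jz hz]] [z' [Jz' hz']]] := sgn_LL hc.
split.
  pose D := [set x | T < x /\ x < z].
  have DJ : D `<=` J.
    by move=> x [Tx xz]; split => //; apply: lt_trans (Jlt0 Jz); rewrite lte_fin.
  have Dne : exists m, D m.
    by exists ((T + z) / 2); have := JT Jz; rewrite /D /=; split; lra.
  have fin : forall c, D c -> (forall x, D x -> LL c1 c2 x != 0) ->
      const_or_strmono_on [set x | D x /\ x < c] (GG a1 a2 c1 c2) ->
      exists b : R, [/\ T < b, (b%:E < x0)%E,
        (forall x, T < x -> x < b -> PH c1 c2 x != 0)
      & const_or_strmono_on [set x | T < x /\ x < b] (GG a1 a2 c1 c2)].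
    move=> c [Tc cz] hL hco; exists c; split => //.
    - exact: Jlt0 (DJ _ (conj Tc cz)).
    - move=> x Tx xc; have Dx : D x by split => //; exact: lt_trans xc cz.
      exact: PH_n0 (DJ _ Dx) (hL _ Dx).
    - apply: cosm_sub hco => x [Tx xc]; split => //; split => //; exact: lt_trans xc cz.
  case: hz => hs.
    have hp : forall x, D x -> 0 < LL c1 c2 x by move=> x [Tx xz]; apply: hs => //; exact: DJ.
    have [c [Dc hco]] := endL (pinc_pos a1 a2 DJ hp) Dne.
    by apply: (fin c Dc) => // x Dx; exact: lt0r_neq0 (hp _ Dx).
  have hp : forall x, D x -> LL c1 c2 x < 0 by move=> x [Tx xz]; apply: hs => //; exact: DJ.
  have [c [Dc hco]] := endL (pinc_neg a1 a2 DJ hp) Dne.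
  by apply: (fin c Dc) => [x Dx|]; [exact: ltr0_neq0 (hp _ Dx)| exact: cosm_opp].
pose D := [set x | J x /\ z' < x].
have DJ : D `<=` J by move=> x [].
have Dne : exists m, D m.
  by have [y [Jy zy]] := Jright Jz'; exists y.
have fin : forall c, D c -> (forall x, D x -> LL c1 c2 x != 0) ->
    const_or_strmono_on [set x | D x /\ c < x] (GG a1 a2 c1 c2) ->
    exists a : R, [/\ T < a, (a%:E < x0)%E,
        (forall x, Ioo_e a x0 x -> PH c1 c2 x != 0)
      & const_or_strmono_on (Ioo_e a x0) (GG a1 a2 c1 c2)].
  move=> c [Jc zc] hL hco; exists c; split.
  - exact: JT Jc.
  - exact: Jlt0 Jc.
  - move=> x [cx xx]; have Dx : D x.
      by split; [split => //; exact: lt_trans (JT Jc) cx| exact: lt_trans zc cx].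
    exact: PH_n0 (DJ _ Dx) (hL _ Dx).
  - apply: cosm_sub hco => x [cx xx]; split => //.
    by split; [split => //; exact: lt_trans (JT Jc) cx| exact: lt_trans zc cx].
case: hz' => hs.
  have hp : forall x, D x -> 0 < LL c1 c2 x by move=> x [Jx zx]; exact: hs.
  have [c [Dc hco]] := endR (pinc_pos a1 a2 DJ hp) Dne.
  by apply: (fin c Dc) => // x Dx; exact: lt0r_neq0 (hp _ Dx).
have hp : forall x, D x -> LL c1 c2 x < 0 by move=> x [Jx zx]; exact: hs.
have [c [Dc hco]] := endR (pinc_neg a1 a2 DJ hp) Dne.
by apply: (fin c Dc) => [x Dx|]; [exact: ltr0_neq0 (hp _ Dx)| exact: cosm_opp].
Qed.

Lemma p2J x : J x -> phi2 x != 0. Proof. by move/JI; exact: p2n0. Qed.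
Lemma p2near x : J x -> \forall h \near (0:R)^', phi2 (x + h) != 0.
Proof. by move/Jnear'; apply: filterS => h; exact: p2J. Qed.

Lemma der_fp2 y : J y -> derivable (fun z => f z / phi2 z) y 1 -> derivable f y 1.
Proof.
move=> Jy dG; have q := qt_mul (derive_qt dG) (qp2 Jy).
have e : \forall h \near (0:R), f (y + h) / phi2 (y + h) * phi2 (y + h) = f (y + h).
  apply: filterS (Jnear Jy) => h Jh; rewrite divfK //; exact: p2J.
by have [] := qt_derive (qt_near e q).
Qed.

Lemma ratio_eq y : J y -> derivable f y 1 ->
  derive1 (fun z => f z / phi2 z) y / derive1 (fun z => phi1 z / phi2 z) y
  = f1star phi1 dphi1 phi2 dphi2 f y.
Proof.
move=> Jy df.
have [_ e1] := qt_derive (qt_div (derive_qt df) (qp2 Jy) (p2J Jy) (p2near Jy)).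
have [_ e2] := qt_derive (qt_div (qp1 Jy) (qp2 Jy) (p2J Jy) (p2near Jy)).
rewrite e1 e2 /f1star /Wr.
have w := lt0r_neq0 (WJ Jy); move: w; rewrite /WW /Wr => w.
have w' : dphi1 y * phi2 y - phi1 y * dphi2 y != 0 by rewrite -oppr_eq0 opprB.
have p := p2J Jy.
by field; rewrite ?w ?w' ?p.
Qed.

Lemma twJ x : J x -> \forall y \near toward x0, J y /\ x < y.
Proof.
move=> Jx; apply: (tw_intro (Jlt0 Jx)) => y xy yx; split => //.
by split => //; exact: lt_trans (JT Jx) xy.
Qed.

Definition Phi y := HH y - UU y * Lft y.

Lemma Phi_le_lim y l : J y -> HH @ toward x0 --> l -> Phi y <= l.
Proof.
move=> Jy hl.
have ev : \forall z \near toward x0, Phi y <= HH z - Lft y * UU z.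
  apply: filterS (twJ Jy) => z [Jz yz].
  rewrite (Hdec Jy Jz yz) /Phi.
  have h1 : Lft y * (UU z - UU y) <= SS y z * (UU z - UU y).
    by apply: ler_wpM2r; [apply: ltW; exact: dU_gt| exact: Lft_le].
  lra.
have c : (fun z => HH z - Lft y * UU z) @ toward x0 --> l - Lft y * 0.
  by apply: cvgB => //; apply: cvgMr; exact: o21.
rewrite mulr0 subr0 in c.
have := @closed_cvg _ _ _ _ _ [set r | Phi y <= r] (@closed_ge _ (Phi y)) ev _ c; exact.
Qed.

Lemma Phi_ge y m : J m -> J y -> m < y -> HH m - UU m * SS m y <= Phi y.
Proof.
move=> Jm Jy my; rewrite /Phi (Hdec Jm Jy my).
have h1 : - UU y * SS m y <= - UU y * Lft y.
  apply: ler_wpM2l; [rewrite oppr_ge0; apply: ltW; exact: Uneg| exact: Lft_ge].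
lra.
Qed.

Definition AA := [set x | J x /\ derivable (fun y => f y / phi2 y) x 1].

Lemma ratio_Phi x : AA x ->
  derive1 (fun y => f y / phi2 y) x / derive1 (fun y => phi1 y / phi2 y) x = Phi x.
Proof.
case=> Jx dG; have df := der_fp2 Jx dG.
by rewrite ratio_eq // f1_eq.
Qed.

Lemma EFin_cvgT (F : set_system R) {FF : Filter F} (r : R -> R) l :
  r @ F --> l -> (fun x => (r x)%:E) @ F --> l%:E.
Proof. by move=> h; apply: cvg_EFin => //; exact: nearW. Qed.

Lemma part4 : exists l : \bar R,
     (fun x => (f x / phi1 x)%:E) @ toward x0 --> l /\
     (fun x => (derive1 (fun y => f y / phi2 y) x
                / derive1 (fun y => phi1 y / phi2 y) x)%:E)
       @ within [set x | Ioo_e T x0 x /\ derivable (fun y => f y / phi2 y) x 1]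
                (toward x0)
       --> l.
Proof.
have [m Jm] := Jex.
pose Sset := [set s | exists y, [/\ J y, m < y & s = SS m y]].
have [y1 [Jy1 my1]] := Jright Jm.
have Sne : Sset !=set0 by exists (SS m y1); exists y1.
have Smon : forall y z, J y -> J z -> m < y -> y <= z -> SS m y <= SS m z.
  move=> y z Jy Jz my yz; apply: Smono => //; exact: lt_le_trans my yz.
have ratE : forall x, AA x -> derive1 (fun y => f y / phi2 y) x
   / derive1 (fun y => phi1 y / phi2 y) x = Phi x by move=> x; exact: ratio_Phi.
have [[B hB]|nb] := pselect (has_ubound Sset).
  have hs : has_sup Sset by split => //; exists B.
  set sg := sup Sset.
  have Sle : forall y, J y -> m < y -> SS m y <= sg.
    by move=> y Jy my; apply: sup_upper_bound => //; exists y.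
  have Scv : (fun y => SS m y) @ toward x0 --> sg.
    apply/cvgrPdist_lt => e e0.
    have [s [y2 [Jy2 my2 ->]] hs2] := sup_adherent e0 hs.
    rewrite -/sg in hs2.
    apply: filterS (twJ Jy2) => z [Jz y2z].
    have h1 := Smon _ _ Jy2 Jz my2 (ltW y2z).
    have h2 := Sle z Jz (lt_trans my2 y2z).
    rewrite ger0_norm ?subr_ge0 //; lra.
  set l := HH m - UU m * sg.
  have Hcv : HH @ toward x0 --> l.
    have e : \forall y \near toward x0, HH m + SS m y * (UU y - UU m) = HH y.
      by apply: filterS (twJ Jm) => y [Jy my]; rewrite -Hdec.
    apply: near_eq_cvgT e _.
    have -> : l = HH m + sg * (0 - UU m) by rewrite /l; ring.
    apply: cvgD; first exact: cvg_cst.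
    apply: cvgM => //; apply: cvgB => //; exact: cvg_cst.
  exists l%:E; split; first exact: EFin_cvgT Hcv.
  apply: EFin_cvgT; apply/cvgrPdist_lt => e e0.
  have lowcv : (fun y => HH m - UU m * SS m y) @ toward x0 --> l.
    by apply: cvgB; [exact: cvg_cst| exact: cvgMr].
  move/cvgrPdist_lt: lowcv => /(_ e e0) ev.
  rewrite near_withinE; apply: filterS2 ev (twJ Jm) => y hy [Jy my] Ay.
  rewrite ratE //.
  have h1 := Phi_ge Jm Jy my; have h2 := Phi_le_lim Jy Hcv.
  rewrite ger0_norm in hy; last by rewrite subr_ge0; exact: le_trans h1 h2.
  by rewrite ger0_norm; [lra| rewrite subr_ge0].
have unb : forall M, exists y, [/\ J y, m < y & M < SS m y].
  move=> M; apply: contrapT => h; apply: nb; exists M => s [y [Jy my ->]].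
  by rewrite leNgt; apply/negP => hlt; apply: h; exists y.
exists +oo%E; split.
  apply/cvgeryP/cvgryPge => A.
  set c := UU y1 - UU m.
  have c0 : 0 < c by exact: dU_gt.
  have [y2 [Jy2 my2 hy2]] := unb (Num.max 0 ((A - HH m) / c)).
  have [y3 [Jy3 hy3]] : exists y3, J y3 /\ y1 <= y3 /\ y2 <= y3.
    have [h|h] := leP y1 y2; first by exists y2; split => //; split.
    by exists y1; split => //; split => //; exact: ltW.
  case: hy3 => y13 y23.
  apply: filterS (twJ Jy3) => z [Jz y3z].
  have mz : m < z by exact: lt_trans my2 (le_lt_trans y23 y3z).
  change (A <= HH z); rewrite (Hdec Jm Jz mz).
  have s1 : Num.max 0 ((A - HH m) / c) < SS m z.
    exact: lt_le_trans hy2 (Smon _ _ Jy2 Jz my2 (le_trans y23 (ltW y3z))).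
  have s2 : c <= UU z - UU m.
    rewrite /c lerD2r; apply: ltW; apply: Uinc => //; exact: le_lt_trans y13 y3z.
  have s3 : Num.max 0 ((A - HH m) / c) * c <= SS m z * (UU z - UU m).
    apply: ler_pM => //.
    - by rewrite le_max lexx.
    - exact: ltW.
    - exact: ltW.
  have s4 : (A - HH m) / c * c <= Num.max 0 ((A - HH m) / c) * c.
    by apply: ler_wpM2r; [exact: ltW| rewrite le_max lexx orbT].
  rewrite divfK ?lt0r_neq0 // in s4; lra.
apply/cvgeryP/cvgryPge => A.
have um : 0 < - UU m by rewrite oppr_gt0; exact: Uneg.
have [y2 [Jy2 my2 hy2]] := unb ((A - HH m) / (- UU m)).
rewrite near_withinE; apply: filterS (twJ Jy2) => z [Jz y2z] Az.
rewrite ratE //.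
have mz : m < z by exact: lt_trans my2 y2z.
have h1 := Phi_ge Jm Jz mz.
have s1 : (A - HH m) / (- UU m) <= SS m z.
  exact: le_trans (ltW hy2) (Smon _ _ Jy2 Jz my2 (ltW y2z)).
have s2 : (A - HH m) / (- UU m) * (- UU m) <= SS m z * (- UU m).
  by apply: ler_wpM2r => //; exact: ltW.
rewrite divfK ?lt0r_neq0 // in s2; lra.
Qed.

Lemma all_parts :
  (forall a b : R, T < a -> a <= b -> (b%:E < x0)%E -> abs_cont_on a b f)
  /\
  (exists N : set R,
     [/\ measurable N, (lebesgue_measure N = 0)%E &
      [/\ (forall t, (Ioo_e T x0 `\` N) t -> derivable f t 1),
         incr_on (Ioo_e T x0 `\` N) (f2star phi1 dphi1 phi2 dphi2 f),
         ((incr_on (Ioo_e T x0 `\` N) (f1star phi1 dphi1 phi2 dphi2 f) /\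
          decr_on (Ioo_e T x0 `\` N) (Fstar T phi1 dphi1 phi2 dphi2 f)) \/
         (decr_on (Ioo_e T x0 `\` N) (f1star phi1 dphi1 phi2 dphi2 f) /\
          incr_on (Ioo_e T x0 `\` N) (Fstar T phi1 dphi1 phi2 dphi2 f)))
       & incr_on (Ioo_e T x0 `\` N)
           (fun t => Num.sg (phi2 t) * Fstar T phi1 dphi1 phi2 dphi2 f t)]])
  /\
  (forall a1 a2 c1 c2 : R, (c1 != 0) || (c2 != 0) ->
     let phit := fun x => c1 * phi1 x + c2 * phi2 x in
     let g := fun x => (f x + a1 * phi1 x + a2 * phi2 x) / phit x in
     (exists b : R, [/\ T < b, (b%:E < x0)%E,
        (forall x, T < x -> x < b -> phit x != 0)
      & const_or_strmono_on [set x | T < x /\ x < b] g]) /\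
     (exists a : R, [/\ T < a, (a%:E < x0)%E,
        (forall x, Ioo_e a x0 x -> phit x != 0)
      & const_or_strmono_on (Ioo_e a x0) g]))
  /\
  (exists l : \bar R,
     (fun x => (f x / phi1 x)%:E) @ toward x0 --> l /\
     (fun x => (derive1 (fun y => f y / phi2 y) x
                / derive1 (fun y => phi1 y / phi2 y) x)%:E)
       @ within [set x | Ioo_e T x0 x /\ derivable (fun y => f y / phi2 y) x 1]
                (toward x0)
       --> l).
Proof.
split; first exact: part1.
split.
  exists NN; split.
  - apply: countable_measurable; last exact: NN_count.
    by move=> t; exact: measurable_set1.
  - exact: countable_lebesgue_measure0 NN_count.
  - split.
    + by move=> t /DN [].
    + exact: f2_incr.
    + by left; split; [exact: f1_incr| exact: F_decr].
    + exact: sgF_incr.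
split; last exact: part4.
by move=> a1 a2 c1 c2 hc; exact: part3.
Qed.

End Main.

Unset Implicit Arguments.

Theorem theorem6p1 (R : realType) (x0 : \bar R) (T : R)
  (phi1 dphi1 phi2 dphi2 f : R -> R) :
  (T%:E < x0)%E ->
  C1_Ico T x0 phi1 dphi1 ->
  C1_Ico T x0 phi2 dphi2 ->
  (fun x => phi2 x / phi1 x) @ toward x0 --> (0 : R) ->
  (forall x, Ico_e T x0 x -> 0 < phi1 x) ->
  (forall x, Ico_e T x0 x -> phi2 x != 0) ->
  (forall x, Ico_e T x0 x -> 0 < Wr phi1 dphi1 phi2 dphi2 x) ->
  gen_convex phi1 phi2 (Ioo_e T x0) f ->
  (* (i) *)
  (forall a b : R, T < a -> a <= b -> (b%:E < x0)%E -> abs_cont_on a b f)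
  /\
  (* (ii) *)
  (exists N : set R,
     [/\ measurable N, (lebesgue_measure N = 0)%E &
      [/\ (forall t, (Ioo_e T x0 `\` N) t -> derivable f t 1),
         incr_on (Ioo_e T x0 `\` N) (f2star phi1 dphi1 phi2 dphi2 f),
         ((incr_on (Ioo_e T x0 `\` N) (f1star phi1 dphi1 phi2 dphi2 f) /\
          decr_on (Ioo_e T x0 `\` N) (Fstar T phi1 dphi1 phi2 dphi2 f)) \/
         (decr_on (Ioo_e T x0 `\` N) (f1star phi1 dphi1 phi2 dphi2 f) /\
          incr_on (Ioo_e T x0 `\` N) (Fstar T phi1 dphi1 phi2 dphi2 f)))
       & incr_on (Ioo_e T x0 `\` N)
           (fun t => Num.sg (phi2 t) * Fstar T phi1 dphi1 phi2 dphi2 f t)]])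
  /\
  (* (iii) *)
  (forall a1 a2 c1 c2 : R, (c1 != 0) || (c2 != 0) ->
     let phit := fun x => c1 * phi1 x + c2 * phi2 x in
     let g := fun x => (f x + a1 * phi1 x + a2 * phi2 x) / phit x in
     (exists b : R, [/\ T < b, (b%:E < x0)%E,
        (forall x, T < x -> x < b -> phit x != 0)
      & const_or_strmono_on [set x | T < x /\ x < b] g]) /\
     (exists a : R, [/\ T < a, (a%:E < x0)%E,
        (forall x, Ioo_e a x0 x -> phit x != 0)
      & const_or_strmono_on (Ioo_e a x0) g]))
  /\
  (* (iv) *)
  (exists l : \bar R,
     (fun x => (f x / phi1 x)%:E) @ toward x0 --> l /\
     (fun x => (derive1 (fun y => f y / phi2 y) x
                / derive1 (fun y => phi1 y / phi2 y) x)%:E)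
       @ within [set x | Ioo_e T x0 x /\ derivable (fun y => f y / phi2 y) x 1]
                (toward x0)
       --> l).
Proof.
move=> h1 h2 h3 h4 h5 h6 h7 h8.
exact: (all_parts h1 h2 h3 h4 h5 h6 h7 h8).
Qed.
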